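(* Let $(X,\Psi)$ be a $\sigma$-compact uniform space and $Y\subseteq X$. The following are equivalent: (1) $X$ satisfies $\textsf{S}_1(\Omega,\Omega_Y)$; (2) ONE has no winning strategy in the game ${\sf G}_1(\Omega,\Omega_Y)$ on $X$.
   Context: A uniformity on $X$ is a filter $\Psi$ on $X\times X$ whose members contain the diagonal, closed under $U\mapsto U^{-1}$, such that for each $U\in\Psi$ there is $V\in\Psi$ with $V\circ V\subseteq U$, and with intersection equal to the diagonal; $X$ has the topology with neighbourhood bases $\{U(x):U\in\Psi\}$, $U(x)=\{y:(x,y)\in U\}$. $\sigma$-compact: countable union of compact sets. $\Omega$: $\omega$-covers of $X$ (open covers $\mathcal{U}$ with $X\notin\mathcal{U}$ such that each finite subset of $X$ lies in some member). $\Omega_Y$: families of open subsets of $X$, none containing $Y$, such that each finite subset of $Y$ lies in some member. $\textsf{S}_1(\mathcal{A},\mathcal{B})$: for every sequence $(O_n)$ of elements of $\mathcal{A}$ there are $T_n\in O_n$ with $\{T_n\}\in\mathcal{B}$. Game ${\sf G}_1(\mathcal{A},\mathcal{B})$: in inning $n$ ONE chooses $O_n\in\mathcal{A}$, TWO responds with $T_n\in O_n$; TWO wins if $\{T_n:n\in\mathbb{N}\}\in\mathcal{B}$, else ONE wins. *)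

(* Defs.v *)
From mathcomp Require Import all_boot all_algebra.
From mathcomp Require Import all_classical all_reals all_analysis.
Set Implicit Arguments. Unset Strict Implicit. Unset Printing Implicit Defensive.
Local Open Scope classical_set_scope.

Section Selection.
Variable X : uniformType.

Definition separated_uniformity : Prop :=
  \bigcap_(U in [set U : set (X * X) | entourage U]) U = diagonal.

Definition sigma_compact : Prop :=
  exists K : nat -> set X, (forall n, compact (K n)) /\ \bigcup_n K n = setT.

Definition Omega : set (set (set X)) :=
  [set U | (forall V, U V -> open V) /\ \bigcup_(V in U) V = setT /\ ~ U setT /\
           (forall F : set X, finite_set F -> exists2 V, U V & F `<=` V)].

Definition OmegaY (Y : set X) : set (set (set X)) :=
  [set U | (forall V, U V -> open V) /\ (forall V, U V -> ~ (Y `<=` V)) /\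
           (forall F : set X, finite_set F -> F `<=` Y -> exists2 V, U V & F `<=` V)].

Definition S1 (A B : set (set (set X))) : Prop :=
  forall O : nat -> set (set X), (forall n, A (O n)) ->
    exists T : nat -> set X, (forall n, O n (T n)) /\ B (range T).

(* Game G_1(A,B): a strategy for ONE maps the finite sequence of TWO's
   previous moves to ONE's next move, a member of A. *)
Definition play_follows (sigma : seq (set X) -> set (set X)) (T : nat -> set X) :=
  forall n, sigma (mkseq T n) (T n).

Definition ONE_has_winning_strategy (A B : set (set (set X))) : Prop :=
  exists sigma : seq (set X) -> set (set X),
    (forall s, A (sigma s)) /\
    (forall T : nat -> set X, play_follows sigma T -> ~ B (range T)).
End Selection.

(* Main.v *)
From HB Require Import structures.
Require Import Defs.
From mathcomp Require Import all_boot all_algebra.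
From mathcomp Require Import all_classical all_reals all_analysis.
From mathcomp Require Import finmap.
Local Open Scope classical_set_scope.

Section PT.
Variables (T : topologicalType) (x0 : T).
Definition PT : Type := T.
HB.instance Definition _ := Topological.copy PT T.
HB.instance Definition _ := isPointed.Build PT x0.
Lemma cc (K : set T) : compact K -> cover_compact K.
Proof. move=> cK. have : @compact PT K by []. by rewrite (@compact_cover PT). Qed.
End PT.
Lemma cc2 (T : topologicalType) (K : set T) : compact K -> cover_compact K.
Proof.
have [[x0 _]|K0] := pselect (K !=set0); first exact: (@cc T x0 K).
move=> _ I D f _ _; exists fset0%fset => //. move=> x Kx; exfalso; apply: K0; by exists x.
Qed.


Section Aux.
Variable X : uniformType.

Definition sball (E : set (X * X)) (s : seq X) : set X :=
  [set z | exists2 x, x \in s & E (x, z)].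

Lemma ent_list {T : eqType} (l : seq T) (P : T -> set (X * X) -> Prop) :
  (forall t E E', E' `<=` E -> P t E -> P t E') ->
  (forall t, t \in l -> exists E, entourage E /\ P t E) ->
  exists E, entourage E /\ forall t, t \in l -> P t E.
Proof.
move=> Pmono; elim: l => [|a l IH] H.
  by exists setT; split; [exact: entourageT | by []].
have [E1 [eE1 PE1]] := H a (mem_head _ _).
have [E2 [eE2 PE2]] : exists E, entourage E /\ forall t, t \in l -> P t E.
  by apply: IH => t tl; apply: H; rewrite in_cons tl orbT.
exists (E1 `&` E2); split; first exact: filterI.
move=> t; rewrite in_cons => /orP[/eqP->|tl].
  by apply: Pmono PE1 => z [].
by apply: Pmono (PE2 t tl) => z [].
Qed.

Lemma LL (k : nat) : forall (U : set (set X)) (K : set X), compact K ->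
  (forall V, U V -> open V) ->
  (forall s : seq X, (size s <= k)%N -> (forall x, x \in s -> K x) ->
     exists2 V, U V & forall x, x \in s -> V x) ->
  exists (A : seq (set X)) (E : set (X * X)),
    [/\ entourage E, forall V, V \in A -> U V &
     forall s : seq X, (size s <= k)%N -> (forall x, x \in s -> K x) ->
       exists2 V, V \in A & sball E s `<=` V].
Proof.
elim: k => [|k IH] U K cK oU H.
  have [V UV _] := H [::] isT (fun x h => ltac:(by rewrite in_nil in h)).
  exists [:: V], setT; split; first exact: entourageT.
    by move=> W; rewrite inE => /eqP->.
  move=> s; rewrite leqn0 size_eq0 => /eqP -> _; exists V; first exact: mem_head.
  by move=> z [].
have [V0 UV0 _] := H [::] isT (fun x h => ltac:(by rewrite in_nil in h)).
pose P x (p : seq (set X) * set (X * X)) :=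
  K x -> [/\ entourage p.2, forall V, V \in p.1 -> U V,
   (forall V, V \in p.1 -> forall y z, p.2 (x, y) -> p.2 (y, z) -> V z) &
   forall s : seq X, (size s <= k)%N -> (forall x, x \in s -> K x) ->
       exists2 V, V \in p.1 & sball p.2 s `<=` V].
have Pex : forall x, exists p, P x p.
  move=> x; have [Kx|nKx] := pselect (K x); last by exists ([::], setT).
  pose Ux := [set V | U V /\ exists2 D, entourage D &
     forall y z, D (x, y) -> D (y, z) -> V z].
  have [A [E [eE AU AP]]] : exists (A : seq (set X)) (E : set (X * X)),
    [/\ entourage E, forall V, V \in A -> Ux V &
     forall s : seq X, (size s <= k)%N -> (forall x, x \in s -> K x) ->
       exists2 V, V \in A & sball E s `<=` V].
    apply: IH => //; first by move=> V [/oU].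
    move=> s ss sK.
    have xsK : forall y, y \in x :: s -> K y.
      by move=> y; rewrite in_cons => /orP[/eqP->|]//; exact: sK.
    have [V UV sV] := H (x :: s) ss xsK.
    exists V => [|y ys]; last by apply: sV; rewrite in_cons ys orbT.
    split => //.
    have : nbhs x V by apply: open_nbhs_nbhs; split; [exact: oU|apply: sV; exact: mem_head].
    move=> /nbhsP [D0 eD0 D0V].
    exists (split_ent D0); first exact: entourage_split_ent.
    move=> y z Dxy Dyz; apply: D0V; rewrite /xsection /=.
    have h := @entourage_split _ y x z D0 eD0 Dxy Dyz. by apply/mem_set.
  have AD : forall V, V \in A -> exists D, entourage D /\
      (forall y z, D (x, y) -> D (y, z) -> V z).
    by move=> V /AU [_ [D eD hD]]; exists D.
  have [D [eD HD]] := ent_list A (fun V D => forall y z, D (x, y) -> D (y, z) -> V z)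
     (fun V E E' sE h y z a b => h y z (sE _ a) (sE _ b)) AD.
  exists (A, D `&` E) => _; split => //=.
  - exact: filterI.
  - by move=> V /AU [].
  - move=> V VA y z Dxy Dyz; case: Dxy => Dxy _; case: Dyz => Dyz _; exact: HD V VA y z Dxy Dyz.
  - move=> s ss sK; have [V VA sV] := AP s ss sK; exists V => //.
    by move=> z [w ws [_ Ewz]]; apply: sV; exists w.
have [f Pf] := choice Pex.
pose g x := interior (xsection (f x).2 x).
have cK' : cover_compact K by exact: cc2.
have [D' D'K KD'] : finite_subset_cover K g K.
  apply: cK' => [x Kx|x Kx]; first exact: open_interior.
  exists x => //; rewrite /g /interior /=.
  by have [eD _ _ _] := Pf x Kx; apply: nbhs_entourage.
have {}D'K : forall x, x \in D' -> K x by move=> x /D'K /set_mem.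
pose A := V0 :: flatten [seq (f x).1 | x <- enum_fset D'].
have [E [eE HE]] := ent_list (enum_fset D') (fun x E => E `<=` (f x).2)
  (fun x E E' sE h => subset_trans sE h)
  (fun x xD => ex_intro _ (f x).2 (conj (let: And4 e _ _ _ := Pf x (D'K x xD) in e) (fun _ h => h))).
exists A, E; split => //.
  move=> V; rewrite in_cons => /orP[/eqP->//|/flattenP[l]].
  move=> /mapP[x xD ->] Vx.
  by have [_ hU _ _] := Pf x (D'K x xD); apply: hU.
case=> [|y s] ss sK.
  by exists V0; [exact: mem_head | move=> z [w]].
have Ky : K y by apply: sK; exact: mem_head.
have [x xD gxy] := KD' y Ky.
have Kx := D'K x xD.
have [_ _ hV hs] := Pf x Kx.
have sK' : forall w, w \in s -> K w by move=> w ws; apply: sK; rewrite in_cons ws orbT.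
have [V VA sV] := hs s ss sK'.
exists V.
  rewrite in_cons; apply/orP; right; apply/flattenP; exists (f x).1 => //.
  by apply/mapP; exists x.
have Dxy : (f x).2 (x, y) by move: (nbhs_singleton gxy); rewrite /xsection /= => /set_mem.
move=> z [w]; rewrite in_cons => /orP[/eqP->|ws] Ewz.
  by apply: (hV V VA y z Dxy); apply: HE xD _ Ewz.
by apply: sV; exists w => //; apply: HE xD _ Ewz.
Qed.
End Aux.
Arguments sball {X}.
Arguments ent_list {X T}.

Section Main.
Variables (X : uniformType) (Y : set X) (K : nat -> set X)
  (sig : seq (set X) -> set (set X)).
Hypotheses (cK : forall n, compact (K n))
  (Kmono : forall i j, (i <= j)%N -> K i `<=` K j)
  (Kcov : forall x, exists j, K j x)
  (hsig : forall s, @Omega X (sig s))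
  (Pfin : finite_set (~` Y))
  (HS1 : S1 (@Omega X) (OmegaY Y)).

Definition gk (k : nat) : nat :=
  if @choice.unpickle (prod nat nat) k is Some p then p.2 else 0%N.

Lemma gk_pickle (n j : nat) : gk (choice.pickle (n, j)) = j.
Proof. by rewrite /gk choice.pickleK. Qed.

Definition sig' s := [set V | sig s V /\ ~` Y `<=` V].

Lemma sball_mono (E E' : set (X * X)) f : E `<=` E' -> sball E f `<=` sball E' f.
Proof. by move=> EE z [x xf Exz]; exists x => //; apply: EE. Qed.

Lemma node_ex s : exists p : seq (set X) * set (X * X),
  [/\ entourage p.2, forall V, V \in p.1 -> sig' s V &
   forall f : seq X, (size f <= gk (size s))%N ->
     (forall x, x \in f -> K (gk (size s)) x) ->
     exists2 V, V \in p.1 & sball p.2 f `<=` V].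
Proof.
have [op [_ [_ fin]]] := hsig s.
have H : forall f : seq X, (size f <= gk (size s))%N ->
    (forall x, x \in f -> K (gk (size s)) x) ->
    exists2 V, sig' s V & forall x, x \in f -> V x.
  move=> f _ _.
  have finF : finite_set ([set` f] `|` ~` Y).
    by rewrite finite_setU; split => //; apply/finite_seqP; exists f.
  have [V sV FV] := fin _ finF.
  exists V; first by split => // x h; apply: FV; right.
  by move=> x xf; apply: FV; left.
have [A [E [eE AU AP]]] := @LL X (gk (size s)) (sig' s) (K (gk (size s))) (cK _)
  (fun V h => op V (proj1 h)) H.
by exists (A, E); split.
Qed.

Definition nd s := projT1 (cid (node_ex s)).
Definition nA s := (nd s).1.
Definition nE s := (nd s).2.
Lemma ndP s : [/\ entourage (nE s), forall V, V \in nA s -> sig' s V &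
   forall f : seq X, (size f <= gk (size s))%N ->
     (forall x, x \in f -> K (gk (size s)) x) ->
     exists2 V, V \in nA s & sball (nE s) f `<=` V].
Proof. exact: (projT2 (cid (node_ex s))). Qed.

Fixpoint desc (d : nat) (s t : seq (set X)) : Prop :=
  if d is d'.+1 then exists2 V, V \in nA s & desc d' (rcons s V) t else t = s.

Lemma desc_ent d : forall s, exists E, entourage E /\
  forall t, desc d s t -> E `<=` nE t.
Proof.
elim: d => [|d IH] s.
  by exists (nE s); split; [by case: (ndP s) | by move=> t /= ->].
have [E [eE HE]] := ent_list (nA s)
  (fun V E => forall t, desc d (rcons s V) t -> E `<=` nE t)
  (fun V E E' sE h t dt => subset_trans sE (h t dt)) (fun V _ => IH (rcons s V)).
by exists E; split => // t [V VA dt]; exact: HE V VA t dt.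
Qed.

Lemma nA_ne s : exists V, V \in nA s.
Proof.
have [_ _ h] := ndP s.
have [V VA _] := h [::] (leq0n _) (fun x xf => ltac:(by rewrite in_nil in xf)).
by exists V.
Qed.

Lemma desc_rcons d : forall s t V, desc d s t -> V \in nA t ->
  desc d.+1 s (rcons t V).
Proof.
elim: d => [|d IH] s t V /=; first by move=> -> VA; exists V.
by move=> [W WA dt] VA; exists W => //; exact: IH.
Qed.

Lemma desc_size d : forall s t, desc d s t -> size t = (size s + d)%N.
Proof.
elim: d => [|d IH] s t /=; first by move=> ->; rewrite addn0.
by move=> [W _ dt]; rewrite (IH _ _ dt) size_rcons addSnnS.
Qed.

Lemma desc_ex d : forall s, exists t, desc d s t.
Proof.
elim: d => [|d IH] s; first by exists s.
have [V VA] := nA_ne s; have [t dt] := IH (rcons s V).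
by exists t; exists V.
Qed.

Definition Elev k := projT1 (cid (desc_ent k [::])).
Lemma ElevP k : entourage (Elev k) /\
  forall t, desc k [::] t -> Elev k `<=` nE t.
Proof. exact: (projT2 (cid (desc_ent k [::]))). Qed.

Definition Q (n : nat) := [set W : set X | [/\ open W, W <> setT &
  exists j (f : seq X), [/\ (size f <= j)%N, (forall x, x \in f -> K j x) &
     W `<=` sball (Elev (choice.pickle (n, j))) f]]].

Lemma seq_bound (f : seq X) : exists j, (size f <= j)%N /\
  forall x, x \in f -> K j x.
Proof.
elim: f => [|a f [j [sj fK]]]; first by exists 0%N.
have [ja Ka] := Kcov a.
exists (maxn j.+1 ja); split; first by rewrite /= leq_max ltnS sj.
move=> x; rewrite in_cons => /orP[/eqP->|xf].
  by apply: (Kmono _ _ (leq_maxr _ _)).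
by apply: (Kmono _ _ (leq_trans (leqnSn j) (leq_maxl _ _))); apply: fK.
Qed.

Lemma Q_fin (n : nat) : forall F : set X, finite_set F -> exists2 V, Q n V & F `<=` V.
Proof.
move=> F /finite_seqP [f ->].
have [j [sj fK]] := seq_bound f.
set k := choice.pickle (n, j).
have [eEk Ek] := ElevP k.
exists (interior (sball (Elev k) f)); last first.
  move=> x xf; rewrite /interior /=.
  apply: filterS (nbhs_entourage x eEk).
  by move=> y /set_mem Exy; exists x.
split; first exact: open_interior.
  move=> WT.
  have [t dt] := desc_ex k [::].
  have st : size t = k by rewrite (desc_size _ _ _ dt).
  have [_ AU AP] := ndP t.
  have [V VA sV] := AP f ltac:(by rewrite st gk_pickle) ltac:(by rewrite st gk_pickle).
  have [_ [_ [nT _]]] := hsig t.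
  have [sigV _] := AU V VA.
  apply: nT; suff <- : V = setT by [].
  apply/seteqP; split => // x _.
  apply: sV; apply: (sball_mono _ _ _ (Ek t dt)); apply: interior_subset.
  by rewrite WT.
by exists j, f; split => //; apply: interior_subset.
Qed.

Lemma Q_omega (n : nat) : @Omega X (Q n).
Proof.
split; first by move=> V [].
split.
  apply/seteqP; split => // x _.
  have [V QV xV] := Q_fin n _ (finite_set1 x).
  by exists V => //; apply: xV.
split; first by case.
exact: Q_fin.
Qed.


Section Branch.
Variables (W : nat -> set X) (jn : nat -> nat) (fn : nat -> seq X).
Hypothesis hW : forall n, [/\ (size (fn n) <= jn n)%N,
  (forall x, x \in fn n -> K (jn n) x) &
  W n `<=` sball (Elev (choice.pickle (n, jn n))) (fn n)].

Lemma child_ex t : exists V, V \in nA t /\ forall n : nat,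
  desc (size t) [::] t -> size t = choice.pickle (n, jn n) -> W n `<=` V.
Proof.
have [[n [dt e]]|nex] := pselect (exists n : nat,
    desc (size t) [::] t /\ size t = choice.pickle (n, jn n)).
  have [s1 s2 s3] := hW n.
  have [_ _ AP] := ndP t.
  have [V VA sV] := AP (fn n) ltac:(by rewrite e gk_pickle)
    ltac:(by rewrite e gk_pickle).
  exists V; split => // n' _ e'.
  have nn : n' = n.
    have := e'; rewrite e => /(pcan_inj choice.pickleK) [->] //.
  subst n'.
  move=> x /s3 h; apply: sV; apply: (sball_mono _ _ _ _ _ h).
  by apply: (proj2 (ElevP _)); rewrite -e.
have [V VA] := nA_ne t.
by exists V; split => // n dt e; exfalso; apply: nex; exists n.
Qed.

Definition child t := projT1 (cid (child_ex t)).
Lemma childP t : child t \in nA t /\ forall n : nat,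
  desc (size t) [::] t -> size t = choice.pickle (n, jn n) -> W n `<=` child t.
Proof. exact: (projT2 (cid (child_ex t))). Qed.

Fixpoint br (k : nat) : seq (set X) :=
  if k is k'.+1 then rcons (br k') (child (br k')) else [::].
Definition Tb k := child (br k).

Lemma br_mkseq k : br k = mkseq Tb k.
Proof. by elim: k => [|k IH] //; rewrite mkseqS -IH. Qed.

Lemma size_br k : size (br k) = k.
Proof. by rewrite br_mkseq size_mkseq. Qed.

Lemma desc_br k : desc k [::] (br k).
Proof.
elim: k => [|k IH] //=.
exact: (desc_rcons _ _ _ _ IH (proj1 (childP _))).
Qed.

Lemma branch_good : play_follows sig Tb /\
  (OmegaY Y (range W) -> OmegaY Y (range Tb)).
Proof.
split.
  move=> n; rewrite -br_mkseq.
  have [_ AU _] := ndP (br n).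
  by have [] := AU _ (proj1 (childP (br n))).
move=> [_ [_ WF]].
have sigT k : sig' (br k) (Tb k).
  by have [_ AU _] := ndP (br k); apply: AU; exact: (proj1 (childP (br k))).
split.
  move=> V [k _ <-]; have [h _] := sigT k.
  by have [op _] := hsig (br k); apply: op.
split.
  move=> V [k _ <-] YT; have [h PT] := sigT k.
  have [_ [_ [nT _]]] := hsig (br k); apply: nT.
  suff <- : Tb k = setT by [].
  apply/seteqP; split => // x _.
  by have [/YT|/PT] := pselect (Y x).
move=> F finF FY.
have [V [n _ <-] FW] := WF F finF FY.
set k := choice.pickle (n, jn n).
exists (Tb k); first by exists k.
move=> x /FW; apply: (proj2 (childP (br k)) n).
  by rewrite size_br; exact: desc_br.
by rewrite size_br.
Qed.

End Branch.

Lemma main_forward : exists T, play_follows sig T /\ OmegaY Y (range T).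
Proof.
have [W [WQ WY]] := HS1 Q Q_omega.
have ex : forall n, exists p : nat * seq X, [/\ (size p.2 <= p.1)%N,
  (forall x, x \in p.2 -> K p.1 x) &
  W n `<=` sball (Elev (choice.pickle (n, p.1))) p.2].
  move=> n; have [_ _ [j [f [h1 h2 h3]]]] := WQ n.
  by exists (j, f).
have [h hP] := choice ex.
have [pf og] := branch_good W (fun n => (h n).1) (fun n => (h n).2) hP.
by eexists; split; [exact: pf | exact: og].
Qed.

End Main.

Lemma cofin (X : uniformType) (Y : set X) : @separated_uniformity X ->
  S1 (@Omega X) (OmegaY Y) -> finite_set (~` Y).
Proof.
move=> sep HS1; apply: contrapT => infY.
have op (p : X) : open (~` [set p]).
  rewrite openE => q /= qp.
  have [E eE nE] : exists2 E, entourage E & ~ E (q, p).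
    apply: contrapT => h; apply: qp.
    have : (\bigcap_(U in [set U : set (X * X) | entourage U]) U) (q, p).
      move=> E eE; apply: contrapT => nE; apply: h; by exists E.
    by rewrite sep.
  apply: filterS (nbhs_entourage q eE) => z /set_mem Eqz zp.
  by apply: nE; rewrite -zp.
pose U := [set V : set X | exists2 p, ~ Y p & V = ~` [set p]].
have fin : forall F : set X, finite_set F -> exists2 V, U V & F `<=` V.
  move=> F finF.
  have [p [nYp nFp]] := infinite_setN0 (infinite_setD infY finF).
  exists (~` [set p]); first by exists p.
  by move=> x Fx xp; apply: nFp; rewrite -xp.
have OU : @Omega X U.
  split; first by move=> V [p _ ->].
  split.
    apply/seteqP; split => // x _.
    have [V UV xV] := fin _ (finite_set1 x).
    by exists V => //; apply: xV.
  split => //.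
  move=> [p _ e].
  have : (~` [set p]) p by rewrite -e.
  by apply.
have [T [UT [_ [nY _]]]] := HS1 (fun _ => U) (fun _ => OU).
have [p nYp e] := UT 0%N.
apply: (nY (T 0%N)); first by exists 0%N.
by rewrite e => y Yy yp; apply: nYp; rewrite -yp.
Qed.

Fixpoint Kc {X : Type} (K0 : nat -> set X) (j : nat) : set X :=
  if j is j'.+1 then Kc K0 j' `|` K0 j else K0 0%N.

Lemma Kc_compact (X : topologicalType) (K0 : nat -> set X) :
  (forall n, compact (K0 n)) -> forall j, compact (Kc K0 j).
Proof. by move=> cK; elim => [|j IH] //=; apply: compactU. Qed.

Lemma Kc_mono {X : Type} (K0 : nat -> set X) i j :
  (i <= j)%N -> Kc K0 i `<=` Kc K0 j.
Proof.
elim: j => [|j IH]; first by rewrite leqn0 => /eqP ->.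
rewrite leq_eqVlt => /orP[/eqP->//|]; rewrite ltnS => /IH h x /h Kx.
by left.
Qed.

Lemma Kc_sub {X : Type} (K0 : nat -> set X) n : K0 n `<=` Kc K0 n.
Proof. by case: n => [|n] //= x Kx; right. Qed.

Theorem theorem4p5 (X : uniformType) (Y : set X) :
  @separated_uniformity X -> @sigma_compact X ->
  (S1 (@Omega X) (OmegaY Y) <-> ~ ONE_has_winning_strategy (@Omega X) (OmegaY Y)).
Proof.
move=> sep [K0 [cK0 K0cov]]; split.
  move=> HS1 [sig [hsig hwin]].
  have Pfin := cofin _ _ sep HS1.
  have Kcov : forall x, exists j, Kc K0 j x.
    move=> x; have : (\bigcup_n K0 n) x by rewrite K0cov.
    by move=> [n _ Kx]; exists n; apply: Kc_sub.
  have [T [pf oT]] := main_forward X Y (Kc K0) sig (Kc_compact _ _ cK0) (Kc_mono K0) Kcov hsig Pfin HS1.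
  exact: hwin T pf oT.
move=> nwin O hO; apply: contrapT => nS; apply: nwin.
exists (fun s => O (size s)); split => // T pf oT.
apply: nS; exists T; split => // n.
by have := pf n; rewrite size_mkseq.
Qed.
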